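(* In the setting described in the context (BFL with Byzantine agents, under hypotheses (i) and (ii)), for every non-faulty agent $i\in\{1,\dots,n-\phi\}$ and every $\theta\neq\theta^*$, $$\frac{1}{t^2}\sum_{r=1}^{t}\Big(\sum_{j=1}^{n-\phi}\Phi_{ij}(t,r+1)\sum_{k=1}^{r}\mathcal{L}^j_k(\theta,\theta^* )-r\sum_{j=1}^{n-\phi}\pi_j(r+1)H_j(\theta,\theta^* )\Big)\longrightarrow 0\quad\text{almost surely as }t\to\infty.$$
   Context: Setting: $n$ agents on a directed graph $G=(\mathcal{V},\mathcal{E})$, $\mathcal{V}=\{1,\dots,n\}$, $\mathcal{I}_i$ the incoming neighbors of $i$; synchronous iterations $t=1,2,\dots$; an unknown set $\mathcal{F}$ of $\phi\le f$ Byzantine agents behaving arbitrarily (arbitrary, inconsistent messages, full knowledge, collusion); the non-faulty agents are indexed $1,\dots,n-\phi$; missing messages are replaced by a default value. Finite hypothesis set $\Theta=\{\theta_1,\dots,\theta_m\}$ with true state $\theta^*$. Agent $i$ has finite signal space $\mathcal{S}_i$ and likelihoods $\ell_i(\cdot\mid\theta)$ with full support; in iteration $t$ it observes $s_t^i\sim\ell_i(\cdot\mid\theta^* )$, independent across agents and iterations. $\ell_i(s_{1,t}^i\mid\theta)=\prod_{r=1}^t\ell_i(s_r^i\mid\theta)$. Define $\mathcal{L}^j_k(\theta,\theta^* )=\log\frac{\ell_j(s_k^j\mid\theta)}{\ell_j(s_k^j\mid\theta^* )}$ and $H_j(\theta,\theta^* )=\sum_{w\in\mathcal{S}_j}\ell_j(w\mid\theta^*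 )\log\frac{\ell_j(w\mid\theta)}{\ell_j(w\mid\theta^* )}=-D(\ell_j(\cdot\mid\theta^* )\|\ell_j(\cdot\mid\theta))$. An $m$-dimensional reduced graph of $G$ is obtained by removing all faulty nodes and their incident links and then, for each non-faulty node, removing up to $mf$ additional incoming links; a source component is a strongly connected component with no incoming links from outside it. Hypotheses: (i) every $m$-dimensional reduced graph of $G$ has a unique source component; (ii) for every $\theta\ne\theta^*$ and every $m$-dimensional reduced graph $\mathcal{H}$ with source component $\mathcal{S}_{\mathcal{H}}$, $\sum_{j\in\mathcal{S}_{\mathcal{H}}}D(\ell_j(\cdot\mid\theta^* )\|\ell_j(\cdot\mid\theta))\neq0$. Let $\chi$ be the number of $m$-dimensional reduced graphs of $G$. Algorithm BFL: One-Iter at agent $i$ with input $x^i\in\mathbb{R}^m$ transmits $x^i$, receives the multiset $R^i$ from incoming neighbors, forms $Z^i$ by adding, for every sub-multiset $C\subseteq R^i\cup\{x^i\}$ of size $(m+1)f+1$, a Tverberg point of $C$ (a point in $\bigcap_{k=1}^{f+1}\mathrm{Conv}(Y_k)$ for a partition of $C$ into $f+1$ nonempty parts with nonempty such intersection), and returns $\frac{1}{1+|Z^i|}(x^i+\sum_{z\in Z^i}z)$. BFL initializes $\mu_0^i$ uniform on $\Theta$ and in iteration $t$ sets $\eta_t^i=\text{One-Iter}(\log\mu_{t-1}^i)$, observes $s_t^i$, and sets $\mu_t^i(\theta)\propto\ell_i(s_{1,t}^i\mid\theta)\exp(\eta_t^i(\theta))$ (normalized over $\Theta$). Matrix representation (known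 property of One-Iter under hypothesis (i)): for each $t\ge1$ there is a (random) row-stochastic matrix $\mathbf{A}[t]\in\mathbb{R}^{(n-\phi)\times(n-\phi)}$ with $\eta_t^i(\theta)=\sum_{j=1}^{n-\phi}\mathbf{A}_{ij}[t]\log\mu_{t-1}^j(\theta)$ for all non-faulty $i$ and all $\theta$, and $\mathbf{A}[t]\ge\beta\mathbf{H}[t]$ entrywise for the adjacency matrix $\mathbf{H}[t]$ of some $m$-dimensional reduced graph, where $0<\beta\le1$ depends only on $G$. Let $\Phi(t,r)=\mathbf{A}[t]\mathbf{A}[t-1]\cdots\mathbf{A}[r]$ for $1\le r\le t$ and $\Phi(t,t+1)=\mathbf{I}$. Then $\lim_{t\to\infty}\Phi(t,r)=\mathbf{1}\pi(r)$ for a stochastic row vector $\pi(r)\in\mathbb{R}^{n-\phi}$, and $|\Phi_{ij}(t,r)-\pi_j(r)|\le(1-\beta^{\nu})^{\lceil (t-r+1)/\nu\rceil}$ for all $t\ge r\ge1$, where $\nu=\chi(n-\phi)$. $\Phi_{ij}$ and $\pi_j$ refer to these objects. *)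

(* Defs.v *)
From HB Require Import structures.
From mathcomp Require Import all_boot all_order all_algebra.
From mathcomp Require Import all_classical all_reals all_analysis.
Set Implicit Arguments. Unset Strict Implicit. Unset Printing Implicit Defensive.
Import Order.TTheory GRing.Theory Num.Theory.
Local Open Scope ring_scope.
Local Open Scope classical_set_scope.

(* Phi_of A t r = A t *m A (t-1) *m ... *m A r  for 1 <= r <= t,
   and the identity when r = t+1 (and, by convention, for r > t). *)
Fixpoint Phi_of (R : realType) (N : nat) (A : nat -> 'M[R]_N) (t r : nat)
  : 'M[R]_N :=
  match t with
  | 0 => 1%:M
  | t'.+1 => if (r <= t'.+1)%N then A t'.+1 *m Phi_of A t' r else 1%:M
  end.

Definition row_stochastic (R : realType) (N : nat) (M : 'M[R]_N) : Prop :=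
  (forall i j, 0 <= M i j) /\ (forall i, \sum_j M i j = 1).

Definition stochastic_row (R : realType) (N : nat) (v : 'rV[R]_N) : Prop :=
  (forall j, 0 <= v 0 j) /\ \sum_j v 0 j = 1.

Definition llr (R : realType) (Th : finType) (S : finType)
  (l : Th -> S -> R) (th ths : Th) (w : S) : R :=
  ln (l th w / l ths w).

Definition Hdiv (R : realType) (Th : finType) (S : finType)
  (l : Th -> S -> R) (th ths : Th) : R :=
  \sum_(w : S) l ths w * ln (l th w / l ths w).

(* Signals s j k (agent j, iteration k >= 1) are mutually independent across
   agents and iterations, and s j k has law l j ths: for every finite family
   of distinct indices (j,k) (k >= 1) and every choice of values, the joint
   probability is the product of the marginal likelihoods. *)
Definition iid_signals (R : realType) (d : measure_display)
  (Omega : measurableType d) (P : probability Omega R) (N : nat)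
  (Th : finType) (S : 'I_N -> finType) (l : forall j, Th -> S j -> R)
  (ths : Th) (s : forall j, nat -> Omega -> S j) : Prop :=
  (forall j k (w : S j), measurable [set om | s j k om = w]) /\
  (forall (F : seq ('I_N * nat)) (w : forall x : 'I_N * nat, S x.1),
     uniq F -> all (fun x => (0 < x.2)%N) F ->
     P (\bigcap_(x in [set x | x \in F]) [set om | s x.1 x.2 om = w x])
     = (\prod_(x <- F) l x.1 ths (w x))%:E).

(* Main.v *)
Require Import Defs.
From HB Require Import structures.
From mathcomp Require Import all_boot all_order all_algebra.
From mathcomp Require Import all_classical all_reals all_analysis.
From mathcomp Require Import ring lra zify.
Import Order.TTheory GRing.Theory Num.Theory.
Import numFieldNormedType.Exports.
Local Open Scope ring_scope.
Local Open Scope classical_set_scope.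
Set Implicit Arguments. Unset Strict Implicit. Unset Printing Implicit Defensive.
Section Moment.
Variables (R : realType) (T : finType) (p : T -> R) (x : T -> R).

Definition consf r (a : T) (w : {ffun 'I_r -> T}) : {ffun 'I_r.+1 -> T} :=
  [ffun k => if unlift ord0 k is Some k' then w k' else a].

Lemma consf0 r a (w : {ffun 'I_r -> T}) : consf a w ord0 = a.
Proof. by rewrite ffunE unlift_none. Qed.

Lemma consfS r a (w : {ffun 'I_r -> T}) k : consf a w (lift ord0 k) = w k.
Proof. by rewrite ffunE liftK. Qed.

Lemma sum_ffunS r (F : {ffun 'I_r.+1 -> T} -> R) :
  \sum_w F w = \sum_(a : T) \sum_(w : {ffun 'I_r -> T}) F (consf a w).
Proof.
rewrite pair_big /=.
rewrite (reindex (fun q : T * {ffun 'I_r -> T} => consf q.1 q.2)) //.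
exists (fun w' : {ffun 'I_r.+1 -> T} => (w' ord0, [ffun k => w' (lift ord0 k)])).
  move=> [a w] _ /=; rewrite consf0; congr (_, _); apply/ffunP => k.
  by rewrite ffunE consfS.
move=> w' _ /=; apply/ffunP => k; rewrite ffunE.
by case: unliftP => [k'|] ->; rewrite ?ffunE.
Qed.

Definition Ef r (g : R -> R) :=
  \sum_(w : {ffun 'I_r -> T}) (\prod_(k < r) p (w k)) * g (\sum_(k < r) x (w k)).

Lemma Ef0 g : Ef 0 g = g 0.
Proof.
rewrite /Ef; under eq_bigr => w _ do rewrite !big_ord0 mul1r.
by rewrite sumr_const card_ffun card_ord expn0 mulr1n.
Qed.

Lemma EfS r g : Ef r.+1 g = \sum_a p a * Ef r (fun y => g (x a + y)).
Proof.
rewrite /Ef sum_ffunS; apply: eq_bigr => a _; rewrite mulr_sumr.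
apply: eq_bigr => w _; rewrite big_ord_recl [in X in g X]big_ord_recl.
rewrite consf0; under eq_bigr => k _ do rewrite consfS.
under [in X in g X]eq_bigr => k _ do rewrite consfS.
by rewrite mulrA.
Qed.

Lemma Ef_ext r g1 g2 : (forall y, g1 y = g2 y) -> Ef r g1 = Ef r g2.
Proof. by move=> e; apply: eq_bigr => w _; rewrite e. Qed.

Lemma EfD r g1 g2 : Ef r (fun y => g1 y + g2 y) = Ef r g1 + Ef r g2.
Proof. by rewrite /Ef -big_split; apply: eq_bigr => w _; rewrite mulrDr. Qed.

Lemma EfZ r c g : Ef r (fun y => c * g y) = c * Ef r g.
Proof. by rewrite /Ef mulr_sumr; apply: eq_bigr => w _; rewrite mulrCA. Qed.


Lemma Ef_sum r m (c : 'I_m -> R) (f : 'I_m -> R -> R) :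
  Ef r (fun y => \sum_(i < m) c i * f i y) = \sum_(i < m) c i * Ef r (f i).
Proof.
rewrite /Ef; under eq_bigr do rewrite mulr_sumr; rewrite exchange_big.
apply: eq_bigr => i _; rewrite mulr_sumr; apply: eq_bigr => w _.
by rewrite mulrCA.
Qed.

Definition Mom r k := Ef r (fun y => y ^+ k).

Lemma MomS r k : Mom r.+1 k =
  \sum_a p a * \sum_(i < k.+1) (x a ^+ (k - i) *+ 'C(k, i)) * Mom r i.
Proof.
rewrite /Mom EfS; apply: eq_bigr => a _; congr (_ * _).
rewrite -Ef_sum; apply: Ef_ext => y; rewrite exprDn.
by apply: eq_bigr => i _; rewrite mulrnAl.
Qed.

Lemma Mom0 k : Mom 0 k = (k == 0)%N%:R.
Proof. by rewrite /Mom Ef0 expr0n. Qed.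

Hypotheses (p1 : \sum_a p a = 1) (px0 : \sum_a p a * x a = 0).

Lemma Mom_0 r : Mom r 0 = 1.
Proof.
elim: r => [|r IH]; first by rewrite Mom0.
rewrite MomS; under eq_bigr => a _ do rewrite big_ord_recl big_ord0 /= IH.
by under eq_bigr => a _ do rewrite expr0 mulr1 addr0 mulr1; rewrite p1.
Qed.

Lemma Mom_1 r : Mom r 1 = 0.
Proof.
elim: r => [|r IH]; first by rewrite Mom0.
rewrite MomS; under eq_bigr => a _ do rewrite !big_ord_recl big_ord0 /= IH Mom_0.
under eq_bigr => a _ do rewrite expr1 mulr0 addr0 mulr1 bin0 mulr1n.
by under eq_bigr => a _ do rewrite addr0.
Qed.

Lemma Mom_2 r : Mom r 2 = r%:R * \sum_a p a * x a ^+ 2.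
Proof.
elim: r => [|r IH]; first by rewrite Mom0 mul0r.
rewrite MomS; under eq_bigr => a _ do rewrite !big_ord_recl big_ord0 /= IH Mom_0 Mom_1.
set V := \sum_(a0 : T) p a0 * x a0 ^+ 2.
rewrite (eq_bigr (fun a => p a * x a ^+ 2 + r%:R * V * p a)); last first.
  by move=> a _; rewrite /bump /= ?addn0 ?add1n ?subn0 ?subSS ?subnn ?bin0 ?binn ?bin1 ?mulr1n ?expr0 ?expr1; ring.
by rewrite big_split /= -mulr_sumr p1 -/V -addn1 natrD; ring.
Qed.

Lemma Mom_4S r : Mom r.+1 4 =
  \sum_a p a * x a ^+ 4 + 6 * r%:R * (\sum_a p a * x a ^+ 2) ^+ 2 + Mom r 4.
Proof.
rewrite MomS; under eq_bigr => a _ do rewrite !big_ord_recl big_ord0 /= Mom_0 Mom_1 Mom_2.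
set V := \sum_(a0 : T) p a0 * x a0 ^+ 2.
set M3 := Mom r 3; set M4 := Mom r 4.
rewrite (eq_bigr (fun a => p a * x a ^+ 4 + (6 * r%:R * V) * (p a * x a ^+ 2)
    + (4 * M3) * (p a * x a) + M4 * p a)); last first.
  by move=> a _; rewrite /bump /= ?addn0 ?add1n ?subn0 ?subSS ?subnn ?bin0 ?binn ?bin1 ?mulr1n ?expr0 ?expr1; rewrite (_ : 'C(4,2) = 6)// (_ : 'C(4,3) = 4)// (_ : (3 - 0 = 3)%N)// (_ : (2 - 0 = 2)%N)//; ring.
rewrite !big_split /= -!mulr_sumr p1 px0 -/V; ring.
Qed.

Variable B : R.
Hypotheses (p0 : forall a, 0 <= p a) (xB : forall a, `|x a| <= B).

Lemma Mom_4_le r : Mom r 4 <= (3 * r%:R ^+ 2 + r%:R) * B ^+ 4.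
Proof.
have x2 a : x a ^+ 2 <= B ^+ 2.
  by have := xB a; rewrite ler_norml => /andP[h1 h2]; nra.
have x4 a : x a ^+ 4 <= B ^+ 4.
  rewrite (_ : 4 = 2 * 2)%N // !exprM.
  by have := x2 a; have := sqr_ge0 (x a); nra.
have V0 : 0 <= \sum_a p a * x a ^+ 2.
  by apply: sumr_ge0 => a _; apply: mulr_ge0 => //; apply: sqr_ge0.
have VB : \sum_a p a * x a ^+ 2 <= B ^+ 2.
  rewrite -[B ^+ 2]mul1r -p1 mulr_suml; apply: ler_sum => a _.
  by apply: ler_wpM2l.
have m4B : \sum_a p a * x a ^+ 4 <= B ^+ 4.
  rewrite -[B ^+ 4]mul1r -p1 mulr_suml; apply: ler_sum => a _.
  by apply: ler_wpM2l.
have B4 : 0 <= B ^+ 4 by rewrite (_ : 4 = 2 * 2)%N // exprM; apply: sqr_ge0.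
elim: r => [|r IH].
  by rewrite /Mom Ef0 expr0n /= expr0n /= mulr0 addr0 mul0r.
rewrite Mom_4S.
set V := \sum_a p a * x a ^+ 2 in V0 VB *.
have V2 : V ^+ 2 <= B ^+ 4 by rewrite (_ : 4 = 2 * 2)%N // exprM; nra.
rewrite -[r.+1]addn1 natrD.
have r0 : 0 <= r%:R :> R by [].
nra.
Qed.
End Moment.
Section Prob.
Variables (R : realType) (d : measure_display) (Omega : measurableType d)
  (P : probability Omega R) (T : finType) (sig : nat -> Omega -> T) (p : T -> R).
Hypothesis msig : forall k w, measurable [set om | sig k om = w].
Hypothesis cylP : forall r (om0 : Omega),
  P [set om | forall k : 'I_r, sig k.+1 om = sig k.+1 om0] =
  (\prod_(k < r) p (sig k.+1 om0))%:E.
Hypothesis p0 : forall a, 0 <= p a.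

Definition cyl r (w : {ffun 'I_r -> T}) := [set om | forall k : 'I_r, sig k.+1 om = w k].

Lemma cyl_meas r (w : {ffun 'I_r -> T}) : measurable (cyl w).
Proof.
have -> : cyl w = \bigcap_(k in [set` enum 'I_r]) [set om | sig k.+1 om = w k].
  apply/seteqP; split => om /= h k; first by move=> _; apply: h.
  by apply: h; rewrite /= mem_enum.
by rewrite bigcap_seq; apply: bigsetI_measurable => k _; apply: msig.
Qed.

Lemma cyl_le r (w : {ffun 'I_r -> T}) : (P (cyl w) <= (\prod_(k < r) p (w k))%:E)%E.
Proof.
have [->|/set0P[om0 h0]] := eqVneq (cyl w) set0.
  by rewrite measure0 lee_fin; apply: prodr_ge0.
have -> : cyl w = [set om | forall k : 'I_r, sig k.+1 om = sig k.+1 om0].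
  by apply/seteqP; split => om /= h k; rewrite h h0.
by rewrite cylP; under eq_bigr => k _ do rewrite h0.
Qed.

Lemma measure_bigU_le (I : Type) (s : seq I) (Q : pred I) (F : I -> set Omega) :
  (forall i, measurable (F i)) ->
  (P (\big[setU/set0]_(i <- s | Q i) F i) <= \sum_(i <- s | Q i) P (F i))%E.
Proof.
move=> mF; elim: s => [|a s IH]; first by rewrite !big_nil measure0.
rewrite !big_cons; case: (Q a) => //.
apply: (le_trans (@measureU2 _ _ _ P _ _ (mF a) _)).
  by apply: bigsetU_measurable => i _; apply: mF.
exact: leeD.
Qed.

Variable x : T -> R.

Definition Dsum r (om : Omega) := \sum_(k < r) x (sig k.+1 om).

Definition Uset r (c : R) :=
  \big[setU/set0]_(w : {ffun 'I_r -> T} | c < `|\sum_(k < r) x (w k)|) cyl w.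

Lemma Uset_meas r c : measurable (Uset r c).
Proof. by apply: bigsetU_measurable => w _; apply: cyl_meas. Qed.

Lemma Uset_sub r c : [set om | c < `|Dsum r om|] `<=` Uset r c.
Proof.
move=> om /= h; rewrite /Uset -bigcup_seq_cond.
exists [ffun k : 'I_r => sig k.+1 om].
  rewrite /= mem_index_enum /=.
  by under eq_bigr => k _ do rewrite ffunE.
by move=> k; rewrite ffunE.
Qed.

Lemma Uset_le r c : 0 < c -> (P (Uset r c) <= (Mom p x r 4 / c ^+ 4)%:E)%E.
Proof.
move=> c0; rewrite /Uset. have h := measure_bigU_le (index_enum {ffun 'I_r -> T}) (fun w : {ffun 'I_r -> T} => c < `|\sum_(k < r) x (w k)|) (@cyl_meas r). apply: le_trans h _.
apply: le_trans; first by apply: lee_sum => w _; apply: cyl_le.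
rewrite sumEFin lee_fin /Mom /Ef mulr_suml.
rewrite [leRHS](bigID (fun w : {ffun 'I_r -> T} => c < `|\sum_(k < r) x (w k)|)) /=.
rewrite -[leLHS]addr0; apply: lerD; last first.
  apply: sumr_ge0 => w _; apply: mulr_ge0; last by rewrite invr_ge0 exprn_ge0 // ltW.
  apply: mulr_ge0; first by apply: prodr_ge0.
  by rewrite (_ : 4 = 2 * 2)%N // exprM; apply: sqr_ge0.
apply: ler_sum => w hw.
have pr0 : 0 <= \prod_(k < r) p (w k) by apply: prodr_ge0.
rewrite -mulrA; rewrite -[leLHS]mulr1; apply: ler_wpM2l => //.
rewrite ler_pdivlMr ?exprn_gt0 // mul1r.
have e : `|\sum_(k < r) x (w k)| ^+ 4 = (\sum_(k < r) x (w k)) ^+ 4.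
  by rewrite -normrX ger0_norm // (_ : 4 = 2 * 2)%N // exprM sqr_ge0.
rewrite -e; apply: lerXn2r; rewrite ?qualifE /= ?normr_ge0 ?ltW //.
Qed.

Lemma aux_tel (q b : R) : 1 <= q -> 0 <= b ->
  (3 * q ^+ 2 + q) * b / q ^+ 4 <= 8 * b * (q^-1 - (q + 1)^-1).
Proof.
move=> q1 b0; have q0 : 0 < q by apply: lt_le_trans q1.
have -> : q^-1 - (q + 1)^-1 = (q * (q + 1))^-1.
  by field; apply/andP; split; apply: lt0r_neq0 => //; apply: ltr_wpDr.
rewrite ler_pdivrMr ?exprn_gt0 //.
rewrite mulrAC ler_pdivlMr ?mulr_gt0 ?ltr_wpDr //.
have h : 0 <= b * (q ^+ 2 * ((5 * q + 1) * (q - 1))).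
  apply: mulr_ge0 => //; apply: mulr_ge0; first exact: sqr_ge0.
  by apply: mulr_ge0; [apply: addr_ge0; [apply: mulr_ge0 => //; apply: ltW|] | rewrite subr_ge0].
nra.
Qed.

Hypotheses (p1 : \sum_a p a = 1) (px0 : \sum_a p a * x a = 0).
Variable B : R.
Hypothesis xB : forall a, `|x a| <= B.

Lemma bc (e : R) : 0 < e ->
  P.-negligible (~` [set om | exists n, forall r, (n <= r)%N -> `|Dsum r om| <= r%:R * e]).
Proof.
move=> e0.
pose F i := Uset i.+1 (i.+1%:R * e).
have mF i : measurable (F i) by apply: Uset_meas.
pose K := 8 * (B ^+ 4 / e ^+ 4).
have B4 : 0 <= B ^+ 4 by rewrite (_ : 4 = 2 * 2)%N // exprM; apply: sqr_ge0.
have K0 : 0 <= K by apply: mulr_ge0 => //; apply: divr_ge0 => //; apply: exprn_ge0; apply: ltW.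
have PF i : (P (F i) <= (K * (i.+1%:R^-1 - (i.+1%:R + 1)^-1))%:E)%E.
  apply: le_trans (Uset_le _ _) _; first by apply: mulr_gt0.
  rewrite lee_fin.
  apply: le_trans (_ : (3 * i.+1%:R ^+ 2 + i.+1%:R) * (B ^+ 4 / e ^+ 4) / i.+1%:R ^+ 4 <= _).
    have -> : (3 * i.+1%:R ^+ 2 + i.+1%:R) * (B ^+ 4 / e ^+ 4) / i.+1%:R ^+ 4 =
        (3 * i.+1%:R ^+ 2 + i.+1%:R) * B ^+ 4 / (i.+1%:R * e) ^+ 4.
      by rewrite exprMn; field; rewrite ?lt0r_neq0 // andbT.
    rewrite ler_wpM2r ?invr_ge0 ?exprn_ge0 ?(mulr_ge0 _ (ltW e0)) //.
    exact: (Mom_4_le p1 px0 p0 xB).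
  rewrite /K; apply: aux_tel => //.
    by rewrite ler1n.
  by apply: divr_ge0 => //; apply: exprn_ge0; apply: ltW.
have Fsum : (\sum_(0 <= i <oo) P (F i) < +oo)%E.
  apply: (@le_lt_trans _ _ K%:E); last by apply: ltry.
  apply: lime_le.
    by apply: is_cvg_nneseries => i _ _; apply: measure_ge0.
  apply: nearW => k.
  apply: (@le_trans _ _ (\sum_(0 <= i < k) (K * (i.+1%:R^-1 - (i.+1%:R + 1)^-1))%:E)%E).
    by apply: lee_sum => i _; apply: PF.
  rewrite sumEFin lee_fin -mulr_sumr.
  have -> : \sum_(0 <= i < k) (i.+1%:R^-1 - (i.+1%:R + 1)^-1) =
      \sum_(0 <= i < k) ((fun j : nat => - (j.+1%:R : R)^-1) i.+1 - (fun j : nat => - (j.+1%:R : R)^-1) i).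
    by apply: eq_bigr => i _; rewrite /= natr1; ring.
  rewrite telescope_sumr // /=.
  rewrite -[leRHS]mulr1 ler_wpM2l //.
  rewrite invr1 opprK (addrC (- _)) -[leRHS]addr0 lerD // oppr_le0 invr_ge0 //.
have L0 := @lim_sup_set_cvg0 _ _ _ P F mF Fsum.
exists (lim_sup_set F); split => //.
  by apply: bigcap_measurable => // k _; apply: bigcup_measurable => j _; apply: mF.
move=> om /= hn k _.
apply: contra_notP hn => hc; exists k.+1 => r hr.
rewrite leNgt; apply/negP => hlt; apply: hc.
exists r.-1; first by rewrite /= -ltnS prednK // (leq_trans _ hr).
rewrite /F prednK; last by rewrite (leq_trans _ hr).
by apply: Uset_sub.
Qed.

Lemma good_negl : P.-negligible (~` [set om | forall m : nat, exists n,
  forall r, (n <= r)%N -> `|Dsum r om| <= r%:R * (m.+1%:R)^-1]).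
Proof.
apply: (@negligibleS _ _ _ _ (\bigcup_m ~` [set om | exists n, forall r, (n <= r)%N ->
   `|Dsum r om| <= r%:R * (m.+1%:R)^-1])).
  move=> om /= h; apply: contra_notP h => h m.
  by apply: contra_notP (h) => h'; exists m.
by apply: negligible_bigcup => m; apply: bc.
Qed.
End Prob.
Section Det.
Variable R : realType.

Lemma cesaro0 (b : nat -> R) : b @ \oo --> 0 ->
  (fun t => t%:R^-1 * \sum_(m < t) b m) @ \oo --> 0.
Proof.
move=> hb; rewrite -cvg_shiftS /=; have := cesaro hb.
rewrite /arithmetic_mean /series /=.
suff -> : (fun n => n.+1%:R^-1 * \sum_(0 <= k < n.+1) b k) =
   (fun n => n.+1%:R^-1 * \sum_(m < n.+1) b m) by [].
by apply: funext => n; rewrite big_mkord.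
Qed.

Lemma cvg_sum0 (I : Type) (s : seq I) (f : I -> nat -> R) :
  (forall j, f j @ \oo --> 0) -> (fun t => \sum_(j <- s) f j t) @ \oo --> 0.
Proof.
move=> hf; elim: s => [|a s IH].
  have -> : (fun t => \sum_(j <- [::]) f j t) = (fun=> 0) by apply: funext => t; rewrite big_nil.
  exact: cvg_cst.
have -> : (fun t => \sum_(j <- a :: s) f j t) = (fun t => f a t + \sum_(j <- s) f j t).
  by apply: funext => t; rewrite big_cons.
rewrite -[X in _ --> X]addr0; exact: cvgD.
Qed.

Lemma cvg_geo_div (g : R) (nu : nat) : 0 <= g -> g < 1 -> (0 < nu)%N ->
  (fun m => g ^+ ((m + nu - 1) %/ nu)) @ \oo --> 0.
Proof.
move=> g0 g1 nu0; apply/cvgrPdist_le => e e0.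
have hg : `|g| < 1 by rewrite ger0_norm.
move: (cvg_expr hg); move/cvgrPdist_le => /(_ e e0) [K _ hK].
exists (K * nu)%N => // m /= hm.
have := hK ((m + nu - 1) %/ nu)%N; rewrite /= !sub0r !normrN; apply.
rewrite leq_divRL //; apply: leq_trans hm _.
by rewrite -addnBA // leq_addr.
Qed.

Lemma good_cvg (D : nat -> R) :
  (forall m : nat, exists n, forall r, (n <= r)%N -> `|D r| <= r%:R * (m.+1%:R)^-1) ->
  (fun m => `|D m.+1| / m.+1%:R) @ \oo --> 0.
Proof.
move=> hD; apply/cvgrPdist_le => e e0.
have hb : e^-1 < (Num.bound e^-1)%:R by apply: archi_boundP; rewrite invr_ge0 ltW.
have [n hn] := hD (Num.bound e^-1).
exists n => // m /= hm.
rewrite sub0r normrN ger0_norm ?divr_ge0 //.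
rewrite ler_pdivrMr // mulrC.
apply: le_trans (hn _ (leqW hm)) _.
rewrite ler_wpM2l // -[leRHS]invrK lef_pV2 ?posrE ?invr_gt0 //.
by apply: le_trans (ltW hb) _; rewrite ler_nat.
Qed.

Lemma sum_rev (f : nat -> R) t : \sum_(1 <= r < t.+1) f (t - r)%N = \sum_(m < t) f m.
Proof.
rewrite big_nat_rev big_add1 /= big_mkord; apply: eq_bigr => m _.
by congr f; have := ltn_ord m; lia.
Qed.

Lemma sum_shift (f : nat -> R) t : \sum_(1 <= r < t.+1) f r.-1 = \sum_(m < t) f m.
Proof. by rewrite big_add1 /= big_mkord. Qed.

Lemma det (N : nat) (i : 'I_N) (Phi : nat -> nat -> 'M[R]_N) (pi : nat -> 'rV[R]_N)
  (S : 'I_N -> nat -> R) (H : 'I_N -> R) (LL g : R) (nu : nat) :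
  (0 < nu)%N -> 0 <= g -> g < 1 -> 0 <= LL ->
  (forall j r, `|S j r| <= r%:R * LL) ->
  (forall t, Phi t t.+1 = 1%:M) ->
  (forall r j, (1 <= r)%N -> 0 <= pi r 0 j <= 1) ->
  (forall t r j, (1 <= r)%N -> (r <= t)%N ->
     `|Phi t r i j - pi r 0 j| <= g ^+ ((t - r + 1 + nu - 1) %/ nu)) ->
  (forall j m, exists n, forall r, (n <= r)%N ->
     `|S j r - r%:R * H j| <= r%:R * (m.+1%:R)^-1) ->
  (fun t => (t%:R ^+ 2)^-1 * \sum_(1 <= r < t.+1)
     (\sum_(j < N) Phi t r.+1 i j * S j r - r%:R * \sum_(j < N) pi r.+1 0 j * H j))
  @ \oo --> 0.
Proof.
move=> nu0 g0 g1 LL0 SB Phi1 pib Phib good.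
pose c m := g ^+ ((m + nu - 1) %/ nu).
pose b j m := `|S j m.+1 - m.+1%:R * H j| / m.+1%:R.
have cc : c @ \oo --> 0 := cvg_geo_div g0 g1 nu0.
have bc j : b j @ \oo --> 0 := good_cvg (good j).
pose u t := N%:R * LL * (t%:R^-1 * \sum_(m < t) c m) +
            \sum_(j < N) (t%:R^-1 * \sum_(m < t) b j m).
have uc : u @ \oo --> 0.
  rewrite -[X in _ --> X]addr0; apply: cvgD.
    by rewrite -[X in _ --> X](mulr0 (N%:R * LL)); apply: (cvgMl_tmp (cesaro0 cc)).
  by apply: cvg_sum0 => j; apply: cesaro0.
have c0 m : 0 <= c m by apply: exprn_ge0.
have b0 j m : 0 <= b j m by apply: divr_ge0.
have tb t r : (1 <= r)%N -> (r <= t)%N ->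
    `|\sum_(j < N) Phi t r.+1 i j * S j r - r%:R * \sum_(j < N) pi r.+1 0 j * H j|
    <= t%:R * (N%:R * LL * c (t - r)%N + \sum_(j < N) b j r.-1).
  move=> r1 rt.
  have -> : \sum_(j < N) Phi t r.+1 i j * S j r - r%:R * \sum_(j < N) pi r.+1 0 j * H j
      = \sum_(j < N) ((Phi t r.+1 i j - pi r.+1 0 j) * S j r
                       + pi r.+1 0 j * (S j r - r%:R * H j)).
    by rewrite mulr_sumr -sumrB; apply: eq_bigr => j _; ring.
  apply: le_trans (ler_norm_sum _ _ _) _.
  apply: (@le_trans _ _ (\sum_(j < N) (c (t - r)%N * (t%:R * LL) + 1 * (t%:R * b j r.-1)))).
    apply: ler_sum => j _.
    apply: le_trans (ler_normD _ _) _; rewrite !normrM.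
    apply: lerD.
      have hPhi : `|Phi t r.+1 i j - pi r.+1 0 j| <= c (t - r)%N.
        case: (ltnP r t) => hrt.
          have := Phib t r.+1 j isT hrt.
          by rewrite addn1 subnSK.
        have -> : t = r by apply/eqP; rewrite eqn_leq rt hrt.
        rewrite Phi1 mxE /c subnn add0n divn_small ?expr0; last first.
          by rewrite ltn_subrL nu0.
        have := pib r.+1 j isT; case: (i == j) => /= /andP[h1 h2];
          rewrite ler_norml; apply/andP; split; lra.
      have hS : `|S j r| <= t%:R * LL.
        by apply: le_trans (SB j r) _; rewrite ler_wpM2r // ler_nat.
      by apply: ler_pM => //; apply: normr_ge0.
    have hpi : `|pi r.+1 0 j| <= 1.
      by have := pib r.+1 j isT => /andP[h1 h2]; rewrite ger0_norm.
    apply: ler_pM; [exact: normr_ge0|exact: normr_ge0|exact: hpi|].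
    have -> : `|S j r - r%:R * H j| = r%:R * b j r.-1.
      rewrite /b prednK // [RHS]mulrC divfK //.
      by rewrite pnatr_eq0 -lt0n.
    by apply: ler_wpM2r => //; rewrite ler_nat.
  rewrite le_eqVlt; apply/orP; left; apply/eqP; rewrite big_split /= -!mulr_sumr sumr_const card_ord.
  by rewrite -mulr_natl; ring.
apply: (@squeeze_cvgr _ _ _ _ (fun t => - u t) u); last exact: uc; last first.
  by rewrite -oppr0; apply: cvgN.
exists 1%N => // t /= t1; rewrite -ler_norml.
have tn0 : t%:R != 0 :> R by rewrite pnatr_eq0 -lt0n.
rewrite normrM ger0_norm ?invr_ge0 ?exprn_ge0 //.
apply: (@le_trans _ _ ((t%:R ^+ 2)^-1 * \sum_(1 <= r < t.+1)
   t%:R * (N%:R * LL * c (t - r)%N + \sum_(j < N) b j r.-1))).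
  apply: ler_wpM2l; first by rewrite invr_ge0 exprn_ge0.
  apply: le_trans (ler_norm_sum _ _ _) _.
  apply: ler_sum_nat => r /andP[r1 rt].
  by apply: tb => //; rewrite -ltnS.
rewrite -mulr_sumr big_split /= -mulr_sumr sum_rev exchange_big /=.
rewrite (eq_bigr (fun j => \sum_(m < t) b j m)); last by move=> j _; rewrite sum_shift.
rewrite /u -!mulr_sumr.
rewrite le_eqVlt; apply/orP; left; apply/eqP.
by field.
Qed.
End Det.

Lemma le_sum1 (R : realType) (I : finType) (F : I -> R) a :
  (forall b, 0 <= F b) -> F a <= \sum_b F b.
Proof.
move=> h; rewrite (bigD1 a) //= ler_wpDr //; apply: sumr_ge0 => b _; exact: h.
Qed.

Theorem lemma3 (R : realType) (d : measure_display) (Omega : measurableType d)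
  (P : probability Omega R)
  (n phi f chi : nat) (Th : finType) (ths : Th)
  (S : 'I_(n - phi) -> finType)
  (l : forall j : 'I_(n - phi), Th -> S j -> R)
  (s : forall j : 'I_(n - phi), nat -> Omega -> S j)
  (A : Omega -> nat -> 'M[R]_(n - phi))
  (pi : Omega -> nat -> 'rV[R]_(n - phi))
  (beta : R) :
  (phi <= f)%N ->
  (0 < chi)%N ->
  (* likelihoods: probability distributions with full support *)
  (forall j th w, 0 < l j th w) ->
  (forall j th, \sum_(w : S j) l j th w = 1) ->
  (* signals: independent across agents and iterations, s^j_k ~ l_j(.|ths) *)
  iid_signals P l ths s ->
  (* matrix representation: row-stochastic A[t], stochastic pi(r), rate *)
  0 < beta -> beta <= 1 ->
  (forall om t, (1 <= t)%N -> row_stochastic (A om t)) ->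
  (forall om r, (1 <= r)%N -> stochastic_row (pi om r)) ->
  (forall om t r i j, (1 <= r)%N -> (r <= t)%N ->
     `| Phi_of (A om) t r i j - pi om r 0 j |
       <= (1 - beta ^+ (chi * (n - phi))) ^+
            ((t - r + 1 + (chi * (n - phi)) - 1) %/ (chi * (n - phi)))) ->
  forall (i : 'I_(n - phi)) (th : Th), th <> ths ->
  {ae P, forall om,
     (fun t : nat =>
        (t%:R ^+ 2)^-1 *
        \sum_(1 <= r < t.+1)
          (\sum_(j < n - phi) Phi_of (A om) t r.+1 i j *
              \sum_(1 <= k < r.+1) llr (l j) th ths (s j k om)
           - r%:R * \sum_(j < n - phi) pi om r.+1 0 j * Hdiv (l j) th ths))
     @ \oo --> 0}.
Proof.
move=> hf chi0 lpos lsum [imeas iprod] beta0 beta1 Ast pist Abnd i th thne.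
have N0 : (0 < n - phi)%N := leq_ltn_trans (leq0n _) (ltn_ord i).
pose nu := (chi * (n - phi))%N.
have nu0 : (0 < nu)%N by rewrite muln_gt0 chi0 N0.
pose g := 1 - beta ^+ nu.
have g0 : 0 <= g by rewrite subr_ge0 exprn_ile1 // ltW.
have g1 : g < 1 by rewrite ltrBlDr ltrDl exprn_gt0.
pose H j := Hdiv (l j) th ths.
pose LL := \sum_(j < n - phi) \sum_(w : S j) `|llr (l j) th ths w|.
have LL0 : 0 <= LL by apply: sumr_ge0 => j _; apply: sumr_ge0.
have llrB j w : `|llr (l j) th ths w| <= LL.
  apply: le_trans (le_sum1 w (fun b => normr_ge0 _)) _.
  exact: (le_sum1 j (fun j => sumr_ge0 _ (fun b _ => normr_ge0 _))).
have lle1 j a : l j ths a <= 1.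
  by rewrite -(lsum j ths); apply: le_sum1 => b; apply: ltW.
have HB j : `|H j| <= LL.
  rewrite /H /Hdiv; apply: le_trans (ler_norm_sum _ _ _) _.
  apply: (@le_trans _ _ (\sum_(w : S j) `|llr (l j) th ths w|)); last first.
    exact: (le_sum1 j (fun j => sumr_ge0 _ (fun b _ => normr_ge0 _))).
  apply: ler_sum => w _; rewrite normrM (ger0_norm (ltW (lpos _ _ _))).
  by rewrite -[leRHS]mul1r ler_wpM2r.
pose x j (a : S j) := llr (l j) th ths a - H j.
have xB j a : `|x j a| <= LL + LL.
  by apply: le_trans (ler_normB _ _) _; apply: lerD.
have px0 j : \sum_a l j ths a * x j a = 0.
  rewrite /x; under eq_bigr => a _ do rewrite mulrBr.
  by rewrite sumrB -mulr_suml lsum mul1r subrr.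
have cylP j r (om0 : Omega) :
    P [set om | forall k : 'I_r, s j k.+1 om = s j k.+1 om0] =
    (\prod_(k < r) l j ths (s j k.+1 om0))%:E.
  pose F := [seq (j, k.+1) | k <- iota 0 r].
  have uF : uniq F by rewrite map_inj_uniq ?iota_uniq // => a b [].
  have pF : all (fun y => 0 < y.2)%N F by apply/allP => y /mapP [k _ ->].
  have := iprod F (fun y => s y.1 y.2 om0) uF pF.
  rewrite big_map.
  have -> : iota 0 r = index_iota 0 r by rewrite /index_iota subn0.
  rewrite big_mkord => <-; congr (P _).
  apply/seteqP; split => om /= h.
    move=> y /mapP [k hk ->] /=.
    have hk' : (k < r)%N by rewrite mem_iota in hk.
    exact: (h (Ordinal hk')).
  move=> k; apply: (h (j, k.+1)).
  by rewrite /= map_f // mem_iota ltn_ord.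
have Nj j := good_negl (imeas j) (cylP j) (fun a => ltW (lpos j ths a))
  (lsum j ths) (px0 j) (xB j).
pose Gd om := forall j m, exists n0, forall r, (n0 <= r)%N ->
  `|Dsum (s j) (x j) r om| <= r%:R / m.+1%:R.
have NG : P.-negligible (~` [set om | Gd om]).
  apply: (@negligibleS _ _ _ _ (\big[setU/set0]_(j <- index_enum 'I_(n - phi))
    ~` [set om | forall m : nat, exists n0, forall r, (n0 <= r)%N ->
       `|Dsum (s j) (x j) r om| <= r%:R / m.+1%:R])).
    move=> om /= hG; rewrite -bigcup_seq.
    apply: contra_notP hG => hc j.
    apply: contra_notP hc => hj; exists j => //; exact: mem_index_enum.
  apply: big_ind => [|A1 A2 h1 h2|j _].
  - exact: negligible_set0.
  - exact: negligibleU.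
  - exact: Nj.
apply: (negligibleS _ NG) => om /= nq hG; apply: nq.
apply: (@det R (n - phi) i (Phi_of (A om)) (pi om)
  (fun j r => \sum_(1 <= k < r.+1) llr (l j) th ths (s j k om)) H LL g nu
  nu0 g0 g1 LL0).
- move=> j r; apply: le_trans (ler_norm_sum _ _ _) _.
  apply: le_trans (ler_sum_nat (fun k _ => llrB j (s j k om))) _.
  by rewrite sumr_const_nat subSS subn0 mulr_natl.
- by case => //= t; rewrite ltnn.
- move=> r j r1; have [h0 h1] := pist om r r1.
  by rewrite h0 /= -h1 (le_sum1 j h0).
- by move=> t r j r1 rt; apply: Abnd.
- move=> j m; have [n0 hn0] := hG j m; exists n0 => r hr.
  have -> : \sum_(1 <= k < r.+1) llr (l j) th ths (s j k om) - r%:R * H j =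
      Dsum (s j) (x j) r om.
    rewrite /Dsum /x sumrB big_add1 /= big_mkord sumr_const card_ord mulr_natl //.
  exact: hn0.
Qed.
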